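(* There is an absolute constant $C>0$ such that the following holds. Let $0<\varepsilon\le 1$ and let $S$ and $T$ be configurations of $n\ge 2$ points each whose smallest enclosing discs have the same center, such that any two distinct points of $S$, and any two distinct points of $T$, are at distance at least $2+\varepsilon$. Then for every direction $\delta$ there exists a translation $\vec v=\lambda\delta$ with $\lambda\ge 0$ such that the unlabeled problem from $S$ to $T+\vec v$ is feasible, $|\vec v|\le C\,(r(S)+r(T))/\sqrt{\varepsilon}$, and $r(S\cup(T+\vec v))\le C\,(r(S)+r(T))/\sqrt{\varepsilon}$.
   Context: For $p\in\mathbb R^2$, $D(p)$ is the open unit disc centered at $p$. $r(P)$ is the radius of the smallest closed disc containing the point set $P$. The unlabeled problem from $S$ to $T'$ is feasible if there exist a bijection $M:S\to T'$ and an ordering $s_1,\dots,s_n$ of $S$ such that for each $i$ the region $\mathrm{conv}(D(s_i)\cup D(M(s_i)))$ swept by translating $D(s_i)$ straight to $M(s_i)$ is disjoint from $D(s_j)$ for all $j>i$ and from $D(M(s_j))$ for all $j<i$. *)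

(* Defs.v *)
From Stdlib Require Import Reals Lra List Permutation.
From Coquelicot Require Import Coquelicot.
Open Scope R_scope.

Definition pt := (R * R)%type.

Definition dist2 (p q : pt) : R :=
  sqrt ((fst p - fst q) ^ 2 + (snd p - snd q) ^ 2).

Definition padd (p q : pt) : pt := (fst p + fst q, snd p + snd q).
Definition pscale (l : R) (p : pt) : pt := (l * fst p, l * snd p).
Definition pnorm (p : pt) : R := sqrt (fst p ^ 2 + snd p ^ 2).

Definition D (p : pt) (x : pt) : Prop := dist2 x p < 1.

Definition convex_set (C : pt -> Prop) : Prop :=
  forall x y t, C x -> C y -> 0 <= t <= 1 ->
    C (padd (pscale (1 - t) x) (pscale t y)).

Definition conv (A : pt -> Prop) (x : pt) : Prop :=
  forall C : pt -> Prop, convex_set C -> (forall y, A y -> C y) -> C x.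

(* region swept by translating D(s) straight to D(t) *)
Definition swept (s t : pt) : pt -> Prop :=
  conv (fun x => D s x \/ D t x).

Definition disjoint (A B : pt -> Prop) : Prop := forall x, ~ (A x /\ B x).

Definition encloses (P : list pt) (c : pt) (rho : R) : Prop :=
  forall p, In p P -> dist2 p c <= rho.

Definition r (P : list pt) : R :=
  real (Glb_Rbar (fun rho => exists c, encloses P c rho)).

Definition sed_center (P : list pt) (c : pt) : Prop := encloses P c (r P).

(* unlabeled motion-planning problem from S to T' is feasible:
   a bijection M : S -> T' and an ordering s_1..s_n of S, encoded as the
   ordering a of S together with b, where b_i = M(a_i). *)
Definition unlabeled_feasible (S T' : list pt) : Prop :=
  exists a b : list pt,
    Permutation S a /\ Permutation T' b /\ length a = length b /\
    forall i, (i < length a)%nat ->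
      (forall j, (i < j < length a)%nat ->
          disjoint (swept (nth i a (0,0)) (nth i b (0,0))) (D (nth j a (0,0)))) /\
      (forall j, (j < i)%nat ->
          disjoint (swept (nth i a (0,0)) (nth i b (0,0))) (D (nth j b (0,0)))).

Definition translate (P : list pt) (v : pt) : list pt := map (fun p => padd p v) P.

Definition config (n : nat) (d : R) (P : list pt) : Prop :=
  length P = n /\ NoDup P /\
  forall p q, In p P -> In q P -> p <> q -> d <= dist2 p q.

(* Main.v *)
Require Import Defs.
From Stdlib Require Import Reals List Lra Psatz Sorting Permutation.
From Coquelicot Require Import Rbar Lub.
Open Scope R_scope.

Lemma sq2_nonneg a b : 0 <= a^2 + b^2.
Proof. assert (0 <= a^2) by apply pow2_ge_0. assert (0 <= b^2) by apply pow2_ge_0. lra. Qed.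

Lemma core (wx wy ux uy ex ey lam eps Rp tau : R) :
  ux^2 + uy^2 = 1 -> wx*ux + wy*uy <= 0 -> (2+eps)^2 <= wx^2 + wy^2 ->
  0 < eps <= 1 -> ex^2 + ey^2 <= 2*Rp^2 -> lam^2 * eps = 16 * Rp^2 -> 0 <= lam ->
  0 <= tau <= 1 ->
  4 <= (wx - tau*(lam*ux+ex))^2 + (wy - tau*(lam*uy+ey))^2.
Proof.
  intros Hu Hwu HW He HE Hl Hl0 Ht.
  remember (lam*ux+ex) as dx eqn:Edx. remember (lam*uy+ey) as dy eqn:Edy.
  remember (wx^2+wy^2) as W eqn:EW. remember (ex^2+ey^2) as E eqn:EE.
  remember (dx^2+dy^2) as Dd eqn:ED.
  remember (wx*dx+wy*dy) as x eqn:Ex.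
  assert (Hq : (wx - tau*dx)^2 + (wy - tau*dy)^2 = W - 2*tau*x + tau^2*Dd)
    by (subst; ring).
  rewrite Hq.
  assert (HW4 : 4 <= W) by (assert ((2+eps)^2 = 4+4*eps+eps*eps) by ring; nra).
  assert (HCS : x^2 <= W*Dd).
  { assert (W*Dd - x^2 = (wx*dy - wy*dx)^2) by (subst; ring).
    assert (0 <= (wx*dy - wy*dx)^2) by apply pow2_ge_0. lra. }
  assert (HD0 : 0 <= Dd) by (rewrite ED; apply sq2_nonneg).
  destruct (Rle_dec x 0) as [Hx|Hx].
  - assert (0 <= tau^2*Dd) by nra. nra.
  - assert (Hxe : x <= wx*ex + wy*ey).
    { assert (x = lam*(wx*ux+wy*uy) + (wx*ex+wy*ey)) by (subst; ring). nra. }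
    assert (Hx2 : x^2 <= W*E).
    { assert (W*E - (wx*ex+wy*ey)^2 = (wx*ey - wy*ex)^2) by (subst; ring).
      assert (0 <= (wx*ey - wy*ex)^2) by apply pow2_ge_0. nra. }
    assert (HD : lam^2 <= 2*Dd + 2*E).
    { assert (lam^2 = lam^2*(ux^2+uy^2)) by (rewrite Hu; ring).
      assert (2*Dd+2*E - lam^2*(ux^2+uy^2) = (lam*ux + 2*ex)^2 + (lam*uy+2*ey)^2)
        by (subst; ring).
      pose proof (sq2_nonneg (lam*ux + 2*ex) (lam*uy+2*ey)). lra. }
    assert (HA : 4*eps*W <= 9*(W-4)) by nra.
    assert (HE0 : 0 <= E) by (rewrite EE; apply sq2_nonneg).
    assert (HeD : 3*E <= eps*Dd) by nra.
    assert (Hkey : W*E <= (W-4)*Dd).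
    { assert (4*eps*(W*E) <= 4*eps*((W-4)*Dd)).
      { assert (4*eps*(W*E) <= 9*(W-4)*E) by nra.
        assert (12*(W-4)*E <= 4*(W-4)*(eps*Dd)) by nra. nra. }
      nra. }
    assert (HDp : 0 < Dd) by nra.
    assert (Dd*(W - 2*tau*x + tau^2*Dd - 4) = (tau*Dd - x)^2 + ((W-4)*Dd - x^2)) by ring.
    assert (0 <= Dd*(W - 2*tau*x + tau^2*Dd - 4)) by (pose proof (pow2_ge_0 (tau*Dd - x)); lra).
    nra.
Qed.

Definition sq (p q : pt) : R := (fst p - fst q)^2 + (snd p - snd q)^2.
Definition seg (s t : pt) (tau : R) : pt :=
  (fst s + tau*(fst t - fst s), snd s + tau*(snd t - snd s)).

Lemma sq_nonneg p q : 0 <= sq p q.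
Proof. unfold sq. pose proof (pow2_ge_0 (fst p - fst q)). pose proof (pow2_ge_0 (snd p - snd q)). lra. Qed.

Lemma D_sq p x : D p x -> sq x p < 1.
Proof. unfold D, dist2. intro H. apply sqrt_lt_0_alt. rewrite sqrt_1. exact H. Qed.

Lemma swept_far s t p :
  (forall tau, 0 <= tau <= 1 -> 4 <= sq p (seg s t tau)) -> disjoint (swept s t) (D p).
Proof.
  intros Hf x [Hx Hp].
  set (Cs := fun y : pt => exists tau, 0 <= tau <= 1 /\ sq y (seg s t tau) < 1).
  assert (HC : Cs x).
  { apply Hx.
    - intros y1 y2 t0 [t1 [Ht1 H1]] [t2 [Ht2 H2]] Ht0.
      exists ((1-t0)*t1 + t0*t2). split; [nra|].
      unfold sq, seg, padd, pscale in *; simpl in *.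
      set (a1 := fst y1 - (fst s + t1 * (fst t - fst s))) in *.
      set (b1 := snd y1 - (snd s + t1 * (snd t - snd s))) in *.
      set (a2 := fst y2 - (fst s + t2 * (fst t - fst s))) in *.
      set (b2 := snd y2 - (snd s + t2 * (snd t - snd s))) in *.
      replace ((1 - t0) * fst y1 + t0 * fst y2 -
        (fst s + ((1 - t0) * t1 + t0 * t2) * (fst t - fst s))) with ((1-t0)*a1 + t0*a2)
        by (unfold a1, a2; ring).
      replace ((1 - t0) * snd y1 + t0 * snd y2 -
        (snd s + ((1 - t0) * t1 + t0 * t2) * (snd t - snd s))) with ((1-t0)*b1 + t0*b2)
        by (unfold b1, b2; ring).
      assert (E : (1-t0)*(a1^2+b1^2) + t0*(a2^2+b2^2) - (((1-t0)*a1 + t0*a2)^2 + ((1-t0)*b1 + t0*b2)^2)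
        = t0*(1-t0)*((a1-a2)^2 + (b1-b2)^2)) by ring.
      assert (0 <= (a1-a2)^2 + (b1-b2)^2) by (pose proof (pow2_ge_0 (a1-a2)); pose proof (pow2_ge_0 (b1-b2)); lra).
      assert (0 <= t0*(1-t0)*((a1-a2)^2 + (b1-b2)^2)) by (apply Rmult_le_pos; nra).
      assert ((1-t0)*(a1^2+b1^2) + t0*(a2^2+b2^2) < 1).
      { destruct (Rle_lt_or_eq_dec 0 t0 (proj1 Ht0)) as [Hq0|Hq0].
        - assert (t0*(a2^2+b2^2) < t0*1) by (apply Rmult_lt_compat_l; lra).
          assert ((1-t0)*(a1^2+b1^2) <= (1-t0)*1) by (apply Rmult_le_compat_l; lra). lra.
        - subst t0. lra. }
      lra.
    - intros y [Hy|Hy].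
      + exists 0. split; [lra|]. apply D_sq in Hy. unfold sq, seg in *; simpl.
        replace (fst s + 0 * (fst t - fst s)) with (fst s) by ring.
        replace (snd s + 0 * (snd t - snd s)) with (snd s) by ring. exact Hy.
      + exists 1. split; [lra|]. apply D_sq in Hy. unfold sq, seg in *; simpl.
        replace (fst s + 1 * (fst t - fst s)) with (fst t) by ring.
        replace (snd s + 1 * (snd t - snd s)) with (snd t) by ring. exact Hy. }
  destruct HC as [tau [Ht Hq]].
  apply D_sq in Hp. specialize (Hf tau Ht).
  unfold sq in *.
  set (q := seg s t tau) in *.
  assert (E : (fst p - fst q)^2 + (snd p - snd q)^2 <=
     2*((fst x - fst p)^2 + (snd x - snd p)^2) + 2*((fst x - fst q)^2 + (snd x - snd q)^2)).
  { assert (2*((fst x - fst p)^2 + (snd x - snd p)^2) + 2*((fst x - fst q)^2 + (snd x - snd q)^2)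
      - ((fst p - fst q)^2 + (snd p - snd q)^2) = (2*fst x - fst p - fst q)^2 + (2*snd x - snd p - snd q)^2) by ring.
    pose proof (pow2_ge_0 (2*fst x - fst p - fst q)). pose proof (pow2_ge_0 (2*snd x - snd p - snd q)). lra. }
  lra.
Qed.

Fixpoint ins (f : pt -> R) (x : pt) (l : list pt) : list pt :=
  match l with
  | nil => x :: nil
  | y :: l' => if Rle_dec (f y) (f x) then x :: l else y :: ins f x l'
  end.
Fixpoint srt (f : pt -> R) (l : list pt) : list pt :=
  match l with nil => nil | x :: l' => ins f x (srt f l') end.
Definition Rl (f : pt -> R) (a b : pt) : Prop := f b <= f a.

Lemma ins_perm f x l : Permutation (x :: l) (ins f x l).
Proof.
  induction l as [|y l IH]; simpl; [auto|].
  destruct (Rle_dec (f y) (f x)); [auto|].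
  eapply perm_trans; [apply perm_swap|]. auto.
Qed.

Lemma srt_perm f l : Permutation l (srt f l).
Proof.
  induction l as [|x l IH]; simpl; [auto|].
  eapply perm_trans; [apply perm_skip, IH|]. apply ins_perm.
Qed.

Lemma ins_sorted f x l : StronglySorted (Rl f) l -> StronglySorted (Rl f) (ins f x l).
Proof.
  induction l as [|y l IH]; simpl; intro H.
  - constructor; auto.
  - apply StronglySorted_inv in H as [H1 H2].
    destruct (Rle_dec (f y) (f x)) as [Hle|Hle].
    + constructor. constructor; auto.
      constructor; [exact Hle|].
      rewrite Forall_forall in *. intros z Hz. specialize (H2 z Hz). unfold Rl in *. lra.
    + constructor; [auto|].
      rewrite Forall_forall in *. intros z Hz.
      apply (Permutation_in _ (Permutation_sym (ins_perm f x l))) in Hz.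
      destruct Hz as [<-|Hz]; [unfold Rl; lra| auto].
Qed.

Lemma srt_sorted f l : StronglySorted (Rl f) (srt f l).
Proof. induction l; simpl; [constructor|]. apply ins_sorted; auto. Qed.

Lemma sorted_nth f l d : StronglySorted (Rl f) l ->
  forall i j, (i < j)%nat -> (j < length l)%nat -> f (nth j l d) <= f (nth i l d).
Proof.
  induction l as [|x l IH]; intros H i j Hij Hj; simpl in *; [lia|].
  apply StronglySorted_inv in H as [H1 H2].
  destruct i as [|i]; destruct j as [|j]; try lia.
  - rewrite Forall_forall in H2. apply H2. apply nth_In. lia.
  - apply IH; auto; lia.
Qed.
Lemma sq_tri p q c : sq p q <= 2 * sq p c + 2 * sq q c.
Proof.
  unfold sq.
  assert (2*((fst p - fst c)^2 + (snd p - snd c)^2) + 2*((fst q - fst c)^2 + (snd q - snd c)^2)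
    - ((fst p - fst q)^2 + (snd p - snd q)^2) = (fst p + fst q - 2*fst c)^2 + (snd p + snd q - 2*snd c)^2) by ring.
  pose proof (pow2_ge_0 (fst p + fst q - 2*fst c)). pose proof (pow2_ge_0 (snd p + snd q - 2*snd c)). lra.
Qed.

Lemma dist_sq_le p q a : dist2 p q <= a -> sq p q <= a^2.
Proof.
  intro H. unfold dist2 in H. fold (sq p q) in H.
  pose proof (sqrt_pos (sq p q)).
  rewrite <- (pow2_sqrt (sq p q)) by apply sq_nonneg.
  apply pow_incr. lra.
Qed.

Lemma dist_sq_ge p q a : 0 <= a -> a <= dist2 p q -> a^2 <= sq p q.
Proof.
  intros Ha H. unfold dist2 in H. fold (sq p q) in H.
  rewrite <- (pow2_sqrt (sq p q)) by apply sq_nonneg.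
  apply pow_incr. lra.
Qed.

Lemma core_src (si sj t : pt) ux uy lam eps Rp tau :
  ux^2 + uy^2 = 1 -> (fst sj - fst si)*ux + (snd sj - snd si)*uy <= 0 ->
  (2+eps)^2 <= sq sj si -> 0 < eps <= 1 -> sq t si <= 2*Rp^2 ->
  lam^2 * eps = 16 * Rp^2 -> 0 <= lam -> 0 <= tau <= 1 ->
  4 <= sq sj (seg si (padd t (lam*ux, lam*uy)) tau).
Proof.
  intros. unfold sq, seg, padd in *; cbn [fst snd] in *.
  pose proof (core (fst sj - fst si) (snd sj - snd si) ux uy (fst t - fst si) (snd t - snd si)
    lam eps Rp tau) as Hc.
  replace ((fst sj - (fst si + tau * (fst t + lam * ux - fst si))) ^ 2 +
   (snd sj - (snd si + tau * (snd t + lam * uy - snd si))) ^ 2) with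
   ((fst sj - fst si - tau * (lam * ux + (fst t - fst si))) ^ 2 +
    (snd sj - snd si - tau * (lam * uy + (snd t - snd si))) ^ 2) by ring.
  apply Hc; auto.
Qed.

Lemma core_tgt (si tj t : pt) ux uy lam eps Rp tau :
  ux^2 + uy^2 = 1 -> (fst tj - fst t)*ux + (snd tj - snd t)*uy >= 0 ->
  (2+eps)^2 <= sq tj t -> 0 < eps <= 1 -> sq t si <= 2*Rp^2 ->
  lam^2 * eps = 16 * Rp^2 -> 0 <= lam -> 0 <= tau <= 1 ->
  4 <= sq (padd tj (lam*ux, lam*uy)) (seg si (padd t (lam*ux, lam*uy)) tau).
Proof.
  intros. unfold sq, seg, padd in *; cbn [fst snd] in *.
  pose proof (core (fst tj - fst t) (snd tj - snd t) (-ux) (-uy) (fst si - fst t) (snd si - snd t)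
    lam eps Rp (1-tau)) as Hc.
  replace ((fst tj + lam*ux - (fst si + tau * (fst t + lam * ux - fst si))) ^ 2 +
   (snd tj + lam*uy - (snd si + tau * (snd t + lam * uy - snd si))) ^ 2) with
   ((fst tj - fst t - (1-tau) * (lam * (-ux) + (fst si - fst t))) ^ 2 +
    (snd tj - snd t - (1-tau) * (lam * (-uy) + (snd si - snd t))) ^ 2) by ring.
  apply Hc; try lra.
  all: try (replace ((-ux)^2 + (-uy)^2) with (ux^2+uy^2) by ring; auto).
  all: try replace ((fst si - fst t)^2 + (snd si - snd t)^2) with ((fst t - fst si)^2 + (snd t - snd si)^2) by ring; auto.
Qed.

Lemma dist_shift t c ux uy lam a : 0 <= lam -> ux^2 + uy^2 = 1 -> dist2 t c <= a ->
  dist2 (padd t (lam*ux, lam*uy)) c <= a + lam.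
Proof.
  intros Hl Hu H.
  assert (Ha : 0 <= a) by (unfold dist2 in H; pose proof (sqrt_pos ((fst t - fst c) ^ 2 + (snd t - snd c) ^ 2)); lra).
  apply dist_sq_le in H. unfold sq in H.
  unfold dist2, padd; simpl.
  rewrite <- (sqrt_pow2 (a + lam)) by lra.
  apply sqrt_le_1_alt.
  set (X := fst t - fst c) in *. set (Y := snd t - snd c) in *.
  replace ((fst t + lam * ux - fst c)) with (X + lam*ux) by (unfold X; ring).
  replace ((snd t + lam * uy - snd c)) with (Y + lam*uy) by (unfold Y; ring).
  set (y := X*ux + Y*uy).
  assert (Hy2 : y^2 <= a^2) .
  { assert ((X^2+Y^2)*(ux^2+uy^2) - y^2 = (X*uy - Y*ux)^2) by (unfold y; ring).
    pose proof (pow2_ge_0 (X*uy - Y*ux)). rewrite Hu in *. lra. }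
  assert (Hy : y <= a) by nra.
  assert ((X + lam*ux)^2 + (Y + lam*uy)^2 = X^2 + Y^2 + 2*lam*y + lam^2*(ux^2+uy^2)) by (unfold y; ring).
  rewrite Hu in *. nra.
Qed.

Lemma r_le P c rho p0 : In p0 P -> encloses P c rho -> r P <= rho.
Proof.
  intros Hp He. unfold r.
  destruct (Glb_Rbar_correct (fun rho => exists c, encloses P c rho)) as [Hlb Hglb].
  assert (H1 : Rbar_le (Glb_Rbar (fun rho => exists c, encloses P c rho)) rho)
    by (apply Hlb; eauto).
  assert (H0 : Rbar_le 0 (Glb_Rbar (fun rho => exists c, encloses P c rho))).
  { apply Hglb. intros x [c' Hc']. simpl. specialize (Hc' p0 Hp).
    unfold dist2 in Hc'. pose proof (sqrt_pos ((fst p0 - fst c') ^ 2 + (snd p0 - snd c') ^ 2)). lra. }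
  destruct (Glb_Rbar (fun rho => exists c, encloses P c rho)); simpl in *; tauto.
Qed.

Lemma r_nonneg P c p0 : In p0 P -> sed_center P c -> 0 <= r P.
Proof.
  intros Hp H. specialize (H p0 Hp). unfold dist2 in H.
  pose proof (sqrt_pos ((fst p0 - fst c) ^ 2 + (snd p0 - snd c) ^ 2)). lra.
Qed.

Theorem mainTheorem8 :
  exists C : R, 0 < C /\
  forall (eps : R) (n : nat) (S T : list pt),
    0 < eps <= 1 -> (2 <= n)%nat ->
    config n (2 + eps) S -> config n (2 + eps) T ->
    (exists c : pt, sed_center S c /\ sed_center T c) ->
    forall delta : pt, pnorm delta = 1 ->
      exists lambda : R, 0 <= lambda /\
        let v := pscale lambda delta in
        unlabeled_feasible S (translate T v) /\
        pnorm v <= C * (r S + r T) / sqrt eps /\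
        r (S ++ translate T v) <= C * (r S + r T) / sqrt eps.
Proof.
  exists 5. split; [lra|].
  intros eps n S T Heps Hn [HlS [HndS HdS]] [HlT [HndT HdT]] [c [HcS HcT]] [ux uy] Hdelta.
  assert (Hu : ux^2 + uy^2 = 1).
  { unfold pnorm in Hdelta; cbn [fst snd] in Hdelta.
    rewrite <- (pow2_sqrt (ux^2+uy^2)) by apply sq2_nonneg. rewrite Hdelta. ring. }
  destruct S as [|s0 S']; [simpl in HlS; lia|].
  destruct T as [|t0 T']; [simpl in HlT; lia|].
  set (S := s0 :: S') in *. set (T := t0 :: T') in *.
  assert (HrS : 0 <= r S) by (apply (r_nonneg S c s0); simpl; auto).
  assert (HrT : 0 <= r T) by (apply (r_nonneg T c t0); simpl; auto).
  set (Rp := r S + r T).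
  set (m := sqrt eps).
  assert (Hm : 0 < m) by (apply sqrt_lt_R0; lra).
  assert (Hmm : m * m = eps) by (apply sqrt_sqrt; lra).
  assert (Hm1 : m <= 1) by (unfold m; rewrite <- sqrt_1; apply sqrt_le_1_alt; lra).
  set (lam := 4 * Rp / m).
  assert (Hl0 : 0 <= lam) by (unfold lam; apply Rmult_le_pos; [unfold Rp; lra| left; apply Rinv_0_lt_compat; lra]).
  assert (Hleps : lam^2 * eps = 16 * Rp^2) by (unfold lam; rewrite <- Hmm; field; lra).
  assert (Hinvm : 1 <= / m) by (rewrite <- Rinv_1; apply Rinv_le_contravar; lra).
  assert (HRp : Rp <= Rp / m) by (unfold Rdiv; unfold Rp in *; nra).
  exists lam. split; [exact Hl0|].
  intro v.
  assert (Hv : v = (lam*ux, lam*uy)) by reflexivity.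
  split; [|split].
  -
    set (f := fun p : pt => fst p * ux + snd p * uy).
    set (a := srt f S). set (b := srt f (translate T v)).
    assert (Hpa : Permutation S a) by apply srt_perm.
    assert (Hpb : Permutation (translate T v) b) by apply srt_perm.
    assert (Hla : length a = n) by (rewrite <- (Permutation_length Hpa); auto).
    assert (Hlb : length b = n)
      by (rewrite <- (Permutation_length Hpb); unfold translate; rewrite length_map; auto).
    assert (HnDa : NoDup a) by (apply (Permutation_NoDup Hpa); auto).
    assert (HnDb : NoDup b).
    { apply (Permutation_NoDup Hpb). unfold translate. apply FinFun.Injective_map_NoDup; auto.
      intros [x1 y1] [x2 y2] H. unfold padd in H; rewrite Hv in H; cbn [fst snd] in H.
      injection H as H1 H2. f_equal; lra. }
    assert (HinA : forall i, (i < n)%nat -> In (nth i a (0,0)) S).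
    { intros i Hi. apply (Permutation_in _ (Permutation_sym Hpa)). apply nth_In. lia. }
    assert (HinB : forall i, (i < n)%nat -> exists t, In t T /\ nth i b (0,0) = padd t v).
    { intros i Hi. assert (In (nth i b (0,0)) (translate T v)).
      { apply (Permutation_in _ (Permutation_sym Hpb)). apply nth_In. lia. }
      unfold translate in H. apply in_map_iff in H. destruct H as [t [Ht1 Ht2]]. eauto. }
    assert (HsA := sorted_nth f a (0,0) (srt_sorted f S)).
    assert (HsB := sorted_nth f b (0,0) (srt_sorted f (translate T v))).
    assert (HE : forall s t, In s S -> In t T -> sq t s <= 2 * Rp^2).
    { intros s t Hs Ht. pose proof (sq_tri t s c).
      pose proof (dist_sq_le _ _ _ (HcS s Hs)). pose proof (dist_sq_le _ _ _ (HcT t Ht)).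
      unfold Rp. nra. }
    exists a, b. split; [exact Hpa|]. split; [exact Hpb|]. split; [lia|].
    intros i Hi. rewrite Hla in Hi.
    destruct (HinB i Hi) as [t [HtT Hbt]].
    rewrite Hbt, Hv.
    split.
    + intros j Hj. apply swept_far. intros tau Htau.
      assert (H1 : (fst (nth j a (0,0)) - fst (nth i a (0,0)))*ux + (snd (nth j a (0,0)) - snd (nth i a (0,0)))*uy <= 0).
      { pose proof (HsA i j (proj1 Hj) ltac:(lia)). unfold f in H. lra. }
      assert (H2 : (2+eps)^2 <= sq (nth j a (0,0)) (nth i a (0,0))).
      { apply dist_sq_ge; [lra|]. apply HdS; try apply HinA; try lia.
        intro Heq. apply (proj1 (NoDup_nth a (0,0)) HnDa j i) in Heq; lia. }
      assert (H3 : sq t (nth i a (0,0)) <= 2*Rp^2) by (apply HE; [apply HinA; lia | auto]).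
      exact (core_src _ _ _ ux uy lam eps Rp tau Hu H1 H2 Heps H3 Hleps Hl0 Htau).
    + intros j Hj. destruct (HinB j ltac:(lia)) as [tj [HtjT Hbtj]].
      rewrite Hbtj, Hv. apply swept_far. intros tau Htau.
      assert (H1 : (fst tj - fst t)*ux + (snd tj - snd t)*uy >= 0).
      { pose proof (HsB j i Hj ltac:(lia)). rewrite Hbt, Hbtj, Hv in H.
        unfold f, padd in H; cbn [fst snd] in H. lra. }
      assert (H2 : (2+eps)^2 <= sq tj t).
      { apply dist_sq_ge; [lra|]. apply HdT; auto.
        intro Heq. subst tj.
        assert (j = i) by (apply (proj1 (NoDup_nth b (0,0)) HnDb); try lia; congruence). lia. }
      assert (H3 : sq t (nth i a (0,0)) <= 2*Rp^2) by (apply HE; [apply HinA; lia | auto]).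
      exact (core_tgt _ _ _ ux uy lam eps Rp tau Hu H1 H2 Heps H3 Hleps Hl0 Htau).
  - rewrite Hv. unfold pnorm; cbn [fst snd].
    replace ((lam*ux)^2 + (lam*uy)^2) with (lam^2 * (ux^2+uy^2)) by ring.
    rewrite Hu, Rmult_1_r, sqrt_pow2 by lra.
    assert (0 <= Rp * / m) by (apply Rmult_le_pos; [unfold Rp; lra| lra]).
    unfold lam. unfold Rdiv.
    replace (5 * (r S + r T) * / sqrt eps) with (5*(Rp*/m)) by (unfold Rp, m; ring). lra.
  - apply Rle_trans with (Rp + lam).
    + apply (r_le _ c _ s0); [simpl; auto|].
      intros p Hp. apply in_app_or in Hp as [Hp|Hp].
      * specialize (HcS p Hp). unfold Rp. lra.
      * unfold translate in Hp. apply in_map_iff in Hp as [t [<- Ht]].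
        rewrite Hv. apply Rle_trans with (r T + lam).
        -- apply dist_shift; auto.
        -- unfold Rp; lra.
    + assert (0 <= Rp * / m) by (apply Rmult_le_pos; [unfold Rp; lra| lra]).
      unfold lam. unfold Rdiv in *.
      replace (5 * (r S + r T) * / sqrt eps) with (5*(Rp*/m)) by (unfold Rp, m; ring). lra.
Qed.
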